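(* Let $d \ge 1$, and for $i \in \{1,2\}$ let $G_i$ be a finite graph with a port numbering $\pi^i$ and a distinguished node $u_i$. Let $\Gamma_i = V(N_d(u_i)) \setminus \{u_i\}$ and let $\mathcal{F}_i$ be any family of subsets of $\Gamma_i$ that contains every singleton $\{v\}$, $v \in \Gamma_i$. If the $d$-hop neighborhoods $N_d(u_1)$ and $N_d(u_2)$ are not isomorphic as rooted graphs (rooted at $u_1$, $u_2$), then $$\{\, \tau_d^{G_1}(u_1; S) : S \in \mathcal{F}_1 \,\} \;\neq\; \{\, \tau_d^{G_2}(u_2; S) : S \in \mathcal{F}_2 \,\}.$$
   Context: A port numbering of a graph $G$ assigns to every node $v$ a bijection $\pi_v$ from the set of neighbors of $v$ to $\{1, \dots, \deg_G(v)\}$. Given $S \subseteq V(G)$ (the set of dropped nodes in a run) and a node $v \notin S$, the depth-$k$ port view $\tau_k^G(v;S)$ is defined recursively: $\tau_0^G(v;S) = \deg_G(v)$, and for $k \ge 1$, $\tau_k^G(v;S) = \big(\deg_G(v), (m_1, \dots, m_{\deg_G(v)})\big)$ where, if $w$ is the neighbor with $\pi_v(w) = j$, then $m_j = \bot$ if $w \in S$ (a dropped node sends no message), and $m_j = \big(\pi_w(v), \tau_{k-1}^G(w;S)\big)$ otherwise. This is the information a node $v$ gathers in $k$ rounds of message passing with port numbers in a run of a dropout GNN in which exactly the nodes of $S$ are dropped. The $d$-hop neighborhood $N_d(u)$ is the graph on all nodes at distance at most $d$ from $u$, containing all edges of $G$ among these nodes except those whose both endpoints are at distance exactly $d$ from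 $u$. The hypothesis that $\mathcal{F}_i$ contains all singletons expresses that every $1$-dropout of the neighborhood of $u_i$ is observed in at least one run (the ''$1$-complete'' setting); other dropout sets may be observed as well. *)

(* Defs.v *)
From mathcomp Require Import all_boot.
Set Implicit Arguments.
Unset Strict Implicit.
Unset Printing Implicit Defensive.

(* Port views: tau_0 = deg (VLeaf), tau_k = (deg, messages) (VNode);
   a message is None (= bot) or Some (port number pi_w(v), tau_{k-1}(w)). *)
Inductive view : Type :=
| VLeaf : nat -> view
| VNode : nat -> seq (option (nat * view)) -> view.

Section Graphs.
Variable T : finType.
Implicit Types (e : rel T) (u v w : T).

Definition simple_graph e := symmetric e /\ irreflexive e.

Definition nbrs e v : {set T} := [set w | e v w].
Definition deg e v : nat := #|nbrs e v|.

Definition port_numbering e (pi : T -> T -> nat) :=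
  forall v, {in nbrs e v &, injective (pi v)} /\
            (forall w, w \in nbrs e v -> 0 < pi v w <= deg e v).

Fixpoint tau e (pi : T -> T -> nat) (S : {set T}) (k : nat) (v : T) : view :=
  match k with
  | 0 => VLeaf (deg e v)
  | k'.+1 =>
      VNode (deg e v)
        [seq (match [pick w | e v w && (pi v w == j)] with
              | Some w => if w \in S then None
                          else Some (pi w v, tau e pi S k' w)
              | None => None
              end) | j <- iota 1 (deg e v)]
  end.

Fixpoint ball e (k : nat) u : {set T} :=
  match k with
  | 0 => [set u]
  | k'.+1 => ball e k' u :|: [set w | [exists x in ball e k' u, e x w]]
  end.

Definition at_dist e (d : nat) u v : bool :=
  (v \in ball e d u) && (if d is d'.+1 then v \notin ball e d' u else true).

Definition nbhd_edge e (d : nat) u (x y : T) : bool :=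
  [&& x \in ball e d u, y \in ball e d u, e x y &
      ~~ (at_dist e d u x && at_dist e d u y)].

Definition Gamma e (d : nat) u : {set T} := ball e d u :\ u.

Definition view_set e pi (F : {set {set T}}) (d : nat) u : view -> Prop :=
  fun t => exists2 S, S \in F & tau e pi S d u = t.

End Graphs.

Definition rooted_nbhd_iso (T1 T2 : finType) (e1 : rel T1) (e2 : rel T2)
    (d : nat) (u1 : T1) (u2 : T2) : Prop :=
  exists (f : T1 -> T2) (g : T2 -> T1),
    (forall x, x \in ball e1 d u1 -> f x \in ball e2 d u2) /\
    (forall y, y \in ball e2 d u2 -> g y \in ball e1 d u1) /\
    (forall x, x \in ball e1 d u1 -> g (f x) = x) /\
    (forall y, y \in ball e2 d u2 -> f (g y) = y) /\
    f u1 = u2 /\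
    (forall x y, x \in ball e1 d u1 -> y \in ball e1 d u1 ->
        nbhd_edge e2 d u2 (f x) (f y) = nbhd_edge e1 d u1 x y).

(* Main.v *)
Require Import Defs.
From mathcomp Require Import all_boot.
Set Implicit Arguments. Unset Strict Implicit. Unset Printing Implicit Defensive.

Fixpoint st (t : view) (p : seq nat) : nat :=
  match p with
  | [::] => 2
  | i :: p' =>
    match t with
    | VLeaf _ => 0
    | VNode _ ms =>
      if i < size ms then
        match nth None ms i with
        | None => if p' is [::] then 1 else 0
        | Some (_, t') => st t' p'
        end
      else 0
    end
  end.

Section One.
Variable T : finType.
Variables (e : rel T) (pi : T -> T -> nat).

Definition step v i : option T := [pick w | e v w && (pi v w == i.+1)].

Fixpoint walk v p : option (seq T) :=
  match p with
  | [::] => Some [::]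
  | i :: p' => match step v i with
               | Some w => omap (cons w) (walk w p')
               | None => None end
  end.

Fixpoint cls (S : {set T}) v p : nat :=
  match p with
  | [::] => 2
  | i :: p' => match step v i with
               | None => 0
               | Some w => if w \in S then (if p' is [::] then 1 else 0) else cls S w p'
               end
  end.

Lemma step_spec v i w : step v i = Some w -> e v w /\ pi v w = i.+1.
Proof. rewrite /step; case: pickP => // x /andP[evx /eqP pix] [<-]; by []. Qed.

Lemma walk_rcons v p i : walk v (rcons p i) =
  if walk v p is Some xs then omap (rcons xs) (step (last v xs) i) else None.
Proof.
elim: p v => [|j p IH] v /=; first by case: (step v i).
case: (step v j) => [w|] //=. rewrite IH. case: (walk w p) => [xs|] //=.
by case: (step _ i).
Qed.

Lemma walk_ball u p xs : walk u p = Some xs -> last u xs \in ball e (size p) u.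
Proof.
elim/last_ind: p xs => [|p i IH] xs /=.
  by case=> <-; rewrite /= inE.
rewrite walk_rcons size_rcons. case E: (walk u p) => [ys|] //.
case E2: (step (last u ys) i) => [w|] //= [<-]. rewrite last_rcons /=.
apply/setUP; right. rewrite inE. apply/existsP; exists (last u ys).
by rewrite (IH ys E) /=; case/step_spec: E2.
Qed.

Lemma cls_end (S : {set T}) v p : cls S v p = 1 ->
  exists xs, walk v p = Some xs /\ xs != [::] /\ last v xs \in S.
Proof.
elim: p v => [|i p IH] v //=.
case: (step v i) => [w|] //.
case: ifP => wS.
  by case: p {IH} => // _; exists [:: w].
move/IH => [xs [-> [xn xl]]]. by exists (w :: xs).
Qed.

Lemma cls1_walk (S : {set T}) v p xs : walk v p = Some xs -> xs != [::] -> last v xs \in S ->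
  all (fun a => a \notin S) (belast v xs) -> cls S v p = 1.
Proof.
elim: p v xs => [|i p IH] v xs /=; first by case=> <-.
case: (step v i) => [w|] //.
case E: (walk w p) => [ys|] //= [<-] _.
case: ys E => [|y ys] E /=.
  have -> : p = [::].
    by case: p E {IH} => //= j p; case: (step w j) => //= ?; case: (walk _ _).
  by move=> ->.
move=> Hl /andP[_ /andP[wS Hb]].
rewrite (negbTE wS). apply: (IH _ _ E) => //=. by rewrite wS.
Qed.

Lemma sub_cls (S S' : {set T}) v p xs : {subset S' <= S} -> cls S v p = 1 -> walk v p = Some xs ->
  cls S' v p = if last v xs \in S' then 1 else 2.
Proof.
move=> sub. elim: p v xs => [|i p IH] v xs //=.
case: (step v i) => [w|] //.
case: ifP => wS.
  case: p {IH} => // _ [<-] /=. by case: ifP.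
move=> H1. case E: (walk w p) => [ys|] //= [<-] /=.
case wS': (w \in S'); first by move: (sub _ wS'); rewrite wS.
exact: IH.
Qed.

Lemma sub3 (S S' : {set T}) v p : {subset S' <= S} -> cls S' v p = 1 -> cls S v p != 2.
Proof.
move=> sub. elim: p v => [|i p IH] v //=.
case: (step v i) => [w|] //.
case: ifP => wS'.
  rewrite (sub _ wS'). by case: p {IH}.
case: ifP => wS; last exact: IH.
by case: p {IH}.
Qed.

Lemma ball_root k u : u \in ball e k u.
Proof. elim: k => [|k IH] /=; [by rewrite inE | by rewrite inE IH]. Qed.

Lemma ball_mono j k u : j <= k -> {subset ball e j u <= ball e k u}.
Proof.
move=> /subnK <-. elim: (k - j) => [|n IH] x // /IH.
by rewrite addSn /= inE => ->.
Qed.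

Lemma minball u k x : x \in ball e k u ->
  exists m, [/\ m <= k, x \in ball e m u & forall j, x \in ball e j u -> m <= j].
Proof.
move=> xb. have ex : exists m, (fun m => x \in ball e m u) m by exists k.
case: (@ex_minnP (fun m => x \in ball e m u) ex) => m xm minm.
exists m; split => //. exact: minm.
Qed.

Hypothesis Hpn : port_numbering e pi.

Lemma step_lt v i w : step v i = Some w -> i < deg e v.
Proof.
move=> /step_spec [evw piw]. have [_ Hb] := Hpn v.
have /Hb : w \in nbrs e v by rewrite inE.
by rewrite piw => /andP[].
Qed.

Lemma step_pi v w : e v w -> step v (pi v w).-1 = Some w.
Proof.
move=> evw. have [Hi Hb] := Hpn v.
have wN : w \in nbrs e v by rewrite inE.
have /andP[p0 _] := Hb w wN.
rewrite /step; case: pickP => [x /andP[evx /eqP]|].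
  rewrite prednK // => pix. congr Some. apply: Hi => //; by rewrite inE.
by move=> /(_ w); rewrite evw prednK // eqxx.
Qed.

Lemma step_ex v i : i < deg e v -> exists w, step v i = Some w.
Proof.
move=> ilt. have [Hi Hb] := Hpn v.
set s1 := map (pi v) (enum (nbrs e v)).
have u1 : uniq s1.
  rewrite map_inj_in_uniq ?enum_uniq // => x y; rewrite !mem_enum; exact: Hi.
have sub : {subset s1 <= iota 1 (deg e v)}.
  move=> j /mapP [x]; rewrite mem_enum => /Hb /andP[x0 xd] ->.
  by rewrite mem_iota add1n ltnS x0 xd.
have sz : size (iota 1 (deg e v)) <= size s1 by rewrite size_iota size_map -cardE.
have [_ eqs] := uniq_min_size u1 sub sz.
have : i.+1 \in s1 by rewrite eqs mem_iota add1n ltnS; exact: ilt.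
case/mapP => x; rewrite mem_enum => xN pix.
exists x. rewrite /step; case: pickP => [y /andP[evy /eqP piy]|].
  congr Some; apply: Hi => //; first by rewrite inE. by rewrite piy pix.
by move=> /(_ x); rewrite -pix eqxx andbT; rewrite inE in xN; rewrite xN.
Qed.



Lemma st_tau k (S : {set T}) v p : size p <= k -> st (tau e pi S k v) p = cls S v p.
Proof.
elim: k v p => [|k IH] v [|i p] //=.
move=> Hs.
have [ilt|ige] := ltnP i (deg e v).
  rewrite size_map size_iota ilt (nth_map 0) ?size_iota // nth_iota // add1n.
  rewrite -/(step v i).
  case E: (step v i) => [w|]; last by have [w Ew] := step_ex ilt; rewrite Ew in E.
  case: (w \in S) => //. exact: IH.
rewrite size_map size_iota ltnNge ige /=.
case E: (step v i) => [w|] //. by move: (step_lt E); rewrite ltnNge ige.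
Qed.

Lemma geo u k x : x \in ball e k u -> exists q xs, walk u q = Some xs /\ size q <= k /\
  last u xs = x /\ all (fun z => z \in ball e k.-1 u) (belast u xs).
Proof.
elim: k x => [|k IH] x /=.
  rewrite inE => /eqP ->. by exists [::], [::].
rewrite inE => /orP[xb|].
  have [q [xs [H1 [H2 [H3 H4]]]]] := IH x xb.
  exists q, xs; do !split => //; first exact: leqW.
  apply: sub_all H4 => z; apply: ball_mono; exact: leq_pred.
rewrite inE => /existsP [z /andP[zb ezx]].
have [q [xs [H1 [H2 [H3 H4]]]]] := IH z zb.
exists (rcons q (pi z x).-1), (rcons xs x).
rewrite walk_rcons H1 H3 step_pi //= size_rcons ltnS H2 last_rcons belast_rcons.
do !split => //.
rewrite lastI all_rcons H3 zb /=.
apply: sub_all H4 => y; apply: ball_mono; exact: leq_pred.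
Qed.

Lemma exists_fh u k x : x \in ball e k u -> x != u ->
  exists p, size p <= k /\ cls [set x] u p = 1.
Proof.
move=> xb xu.
have [m [mk xm minm]] := minball xb.
have [q [xs [H1 [H2 [H3 H4]]]]] := geo xm.
exists q; split; first exact: leq_trans H2 mk.
apply: (cls1_walk H1).
- by apply: contra xu => /eqP xs0; rewrite -H3 xs0.
- by rewrite H3 inE.
- apply/allP => z zin; rewrite inE; apply/eqP => zx.
  have := allP H4 z zin; rewrite zx => /minm.
  case: m xm {minm H2 H4 mk} => [|m] xm //=.
    by rewrite inE in xm; rewrite xm in xu.
  by rewrite ltnn.
Qed.

End One.

Definition Mrel (T1 T2 : finType) (e1 : rel T1) pi1 (u1 : T1) (e2 : rel T2) pi2 (u2 : T2)
  (d : nat) v w :=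
  forall p, size p <= d -> cls e1 pi1 [set v] u1 p = 1 -> cls e2 pi2 [set w] u2 p = 1.

Section Two.
Variables (T1 T2 : finType) (e1 : rel T1) (pi1 : T1 -> T1 -> nat) (u1 : T1)
  (e2 : rel T2) (pi2 : T2 -> T2 -> nat) (u2 : T2).
Hypothesis pn1 : port_numbering e1 pi1.
Hypothesis pn2 : port_numbering e2 pi2.

Lemma match1 d (F1 : {set {set T1}}) (F2 : {set {set T2}}) v :
  v \in Gamma e1 d u1 ->
  (exists2 S, S \in F2 & tau e2 pi2 S d u2 = tau e1 pi1 [set v] d u1) ->
  (forall S, S \in F2 -> S \subset Gamma e2 d u2) ->
  (forall w, w \in Gamma e2 d u2 ->
     exists2 S', S' \in F1 & tau e1 pi1 S' d u1 = tau e2 pi2 [set w] d u2) ->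
  exists w, w \in Gamma e2 d u2 /\ Mrel e1 pi1 u1 e2 pi2 u2 d v w.
Proof.
move=> vG [S SF tS] FG Hw.
rewrite in_setD1 in vG; case/andP: vG => vu vb.
have [p0 [sp0 c0]] := exists_fh pn1 vb vu.
have eqc : forall p, size p <= d -> cls e2 pi2 S u2 p = cls e1 pi1 [set v] u1 p.
  by move=> p sp; rewrite -(st_tau pn2 S u2 sp) -(st_tau pn1 _ _ sp) tS.
have c0' : cls e2 pi2 S u2 p0 = 1 by rewrite eqc.
have [zs [wz [zn zl]]] := cls_end c0'.
set w0 := last u2 zs.
have w0G : w0 \in Gamma e2 d u2 := subsetP (FG S SF) _ zl.
have [S' S'F tS'] := Hw w0 w0G.
have eqc' : forall p, size p <= d -> cls e1 pi1 S' u1 p = cls e2 pi2 [set w0] u2 p.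
  by move=> p sp; rewrite -(st_tau pn2 _ u2 sp) -(st_tau pn1 _ _ sp) tS'.
have c1 : cls e2 pi2 [set w0] u2 p0 = 1.
  rewrite (sub_cls (S:=S) _ c0' wz) ?inE ?eqxx //.
  by move=> z; rewrite inE => /eqP ->.
have vS' : v \in S'.
  have c2 : cls e1 pi1 S' u1 p0 = 1 by rewrite eqc'.
  have [xs [wx [_ xl]]] := cls_end c2.
  have [xs' [wx' [_ xl']]] := cls_end c0.
  rewrite wx in wx'; case: wx' => exs; rewrite -exs in xl'.
  by rewrite inE in xl'; rewrite -(eqP xl').
exists w0; split => // p sp cp.
have c2 : cls e2 pi2 S u2 p = 1 by rewrite eqc.
have [zs2 [wz2 _]] := cls_end c2.
have sub : {subset [set w0] <= S} by move=> z; rewrite inE => /eqP ->.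
move: (sub_cls sub c2 wz2). case: ifP => // _ c3.
have sub' : {subset [set v] <= S'} by move=> z; rewrite inE => /eqP ->.
have := sub3 sub' cp.
by rewrite eqc' // c3.
Qed.

Lemma inverse d (f : T1 -> T2) (g : T2 -> T1) :
  f u1 = u2 -> g u2 = u1 ->
  (forall x, x \in Gamma e1 d u1 -> f x \in Gamma e2 d u2 /\ Mrel e1 pi1 u1 e2 pi2 u2 d x (f x)) ->
  (forall y, y \in Gamma e2 d u2 -> g y \in Gamma e1 d u1 /\ Mrel e2 pi2 u2 e1 pi1 u1 d y (g y)) ->
  forall x, x \in ball e1 d u1 -> g (f x) = x.
Proof.
move=> f0 g0 Hf Hg x xb.
case: (x =P u1) => [->|xu]; first by rewrite f0 g0.
have xG : x \in Gamma e1 d u1 by rewrite in_setD1 xb andbT; apply/eqP.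
have [fG Mx] := Hf x xG.
have [gG My] := Hg (f x) fG.
have [p0 [sp0 c0]] := exists_fh pn1 xb (introN eqP xu).
have c := My p0 sp0 (Mx p0 sp0 c0).
have [xs [wx [_ xl]]] := cls_end c.
have [xs' [wx' [_ xl']]] := cls_end c0.
rewrite wx in wx'; case: wx' => exs; rewrite -exs in xl'.
rewrite !inE in xl xl'. by rewrite -(eqP xl) (eqP xl').
Qed.

Lemma nbhd_edge_sym (T : finType) (e : rel T) d u x y : symmetric e ->
  nbhd_edge e d u x y = nbhd_edge e d u y x.
Proof.
move=> se; rewrite /nbhd_edge se.
by case: (x \in _); case: (y \in _); case: (e y x); case: (at_dist _ _ _ x); case: (at_dist _ _ _ y).
Qed.

End Two.

Section Three.
Variables (T1 T2 : finType) (e1 : rel T1) (pi1 : T1 -> T1 -> nat) (u1 : T1)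
  (e2 : rel T2) (pi2 : T2 -> T2 -> nat) (u2 : T2).
Hypothesis pn1 : port_numbering e1 pi1.
Hypothesis pn2 : port_numbering e2 pi2.
Hypothesis sg1 : simple_graph e1.
Hypothesis sg2 : simple_graph e2.

Lemma edge_map d (f : T1 -> T2) :
  f u1 = u2 ->
  (forall x, x \in Gamma e1 d.+1 u1 -> f x \in Gamma e2 d.+1 u2 /\ Mrel e1 pi1 u1 e2 pi2 u2 d.+1 x (f x)) ->
  forall x y, x \in ball e1 d.+1 u1 -> y \in ball e1 d.+1 u1 ->
  nbhd_edge e1 d.+1 u1 x y -> nbhd_edge e2 d.+1 u2 (f x) (f y).
Proof.
move=> f0 Hf x y xb yb.
have [mx [mxk xmx minx]] := minball xb.
have [my [myk ymy miny]] := minball yb.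
case: sg1 => sym1 irr1. case: sg2 => sym2 irr2.
wlog le : x y xb yb mx my mxk xmx minx myk ymy miny / mx <= my.
  move=> H. case: (leqP mx my) => [le|lt]; first exact: H le.
  rewrite nbhd_edge_sym // [nbhd_edge e2 _ _ _ _]nbhd_edge_sym // => E.
  exact: (H y x yb xb my mx myk ymy miny mxk xmx minx (ltnW lt)).
case/and4P => _ _ exy nd.
have mxd : mx <= d.
  rewrite leqNgt; apply/negP => lt.
  move: nd; rewrite /at_dist xb yb /=.
  have -> : (x \in ball e1 d u1) = false.
    by apply/negP => /minx; rewrite leqNgt lt.
  have -> : (y \in ball e1 d u1) = false.
    by apply/negP => /miny; rewrite leqNgt (leq_trans lt le).
  by [].
have [q [xs [H1 [H2 [H3 H4]]]]] := geo pn1 xmx.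
set i := (pi1 x y).-1.
have wq : walk e1 pi1 u1 (rcons q i) = Some (rcons xs y).
  by rewrite walk_rcons H1 H3 /i step_pi.
have xy : x != y by apply: contraTneq exy => ->; rewrite irr1.
have ynot : all (fun z => z \notin [set y]) (belast u1 (rcons xs y)).
  rewrite belast_rcons lastI all_rcons H3 inE xy /=.
  apply/allP => z zin; rewrite inE; apply/eqP => zy.
  have := allP H4 z zin; rewrite zy => /miny.
  case: (mx) xmx le minx {H2 H4} => [|m'] xmx le' minx' /=.
    rewrite leqn0 => /eqP my0. rewrite my0 /= inE in ymy.
    rewrite /= inE in xmx. by rewrite (eqP xmx) (eqP ymy) eqxx in xy.
  by move=> h; have := leq_trans le' h; rewrite ltnn.
have cy : cls e1 pi1 [set y] u1 (rcons q i) = 1.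
  apply: (cls1_walk wq) => //; first by case: (xs).
  by rewrite last_rcons inE.
have yG : y \in Gamma e1 d.+1 u1.
  rewrite in_setD1 yb andbT. move: ynot; rewrite belast_rcons /= inE.
  by case/andP; rewrite eq_sym.
have sz : size (rcons q i) <= d.+1 by rewrite size_rcons ltnS (leq_trans H2 mxd).
have [fyG My] := Hf y yG.
have cfy := My _ sz cy.
have [zs' [wz' [_ zl']]] := cls_end cfy.
have [zs [wz zl]] : exists zs, walk e2 pi2 u2 q = Some zs /\ last u2 zs = f x.
  case: (x =P u1) => [xu|xu].
    have mx0 : mx = 0 by apply/eqP; rewrite -leqn0; apply: minx; rewrite xu; exact: ball_root.
    move: H2; rewrite mx0 leqn0 => /eqP/size0nil ->.
    by exists [::]; rewrite xu f0.
  have xG : x \in Gamma e1 d.+1 u1 by rewrite in_setD1 xb andbT; apply/eqP.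
  have cx : cls e1 pi1 [set x] u1 q = 1.
    apply: (cls1_walk H1).
    - apply/eqP => xs0; apply: xu; by rewrite -H3 xs0.
    - by rewrite H3 inE.
    apply/allP => z zin; rewrite inE; apply/eqP => zx.
    have := allP H4 z zin; rewrite zx => /minx.
    case: (mx) xmx {minx H2 H4 mxd le} => [|m] xmx //=.
      by rewrite inE in xmx; move/eqP: xmx.
    by rewrite ltnn.
  have [fxG Mx] := Hf x xG.
  have [zs [wz [_ zl]]] := cls_end (Mx _ (leq_trans H2 (leq_trans mxd (leqnSn _))) cx).
  by exists zs; split => //; rewrite inE in zl; apply/eqP.
have wz'' := wz'; move: wz''; rewrite walk_rcons wz zl.
case E: (step e2 pi2 (f x) i) => [w|] //= [ezs].
rewrite -ezs last_rcons inE in zl'. rewrite (eqP zl') in E.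
have [efxy _] := step_spec E.
have fxb : f x \in ball e2 d u2.
  rewrite -zl. apply: ball_mono (walk_ball wz). exact: leq_trans H2 mxd.
have fyb : f y \in ball e2 d.+1 u2.
  have := walk_ball wz'; rewrite -ezs last_rcons (eqP zl'); exact: (ball_mono sz).
rewrite /nbhd_edge /at_dist (ball_mono (leqnSn d) fxb) fyb efxy fxb /=.
by [].
Qed.
End Three.

Theorem theorem4 (d : nat) (T1 T2 : finType)
    (e1 : rel T1) (pi1 : T1 -> T1 -> nat) (u1 : T1) (F1 : {set {set T1}})
    (e2 : rel T2) (pi2 : T2 -> T2 -> nat) (u2 : T2) (F2 : {set {set T2}}) :
  0 < d ->
  simple_graph e1 -> port_numbering e1 pi1 ->
  simple_graph e2 -> port_numbering e2 pi2 ->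
  (forall S, S \in F1 -> S \subset Gamma e1 d u1) ->
  (forall v, v \in Gamma e1 d u1 -> [set v] \in F1) ->
  (forall S, S \in F2 -> S \subset Gamma e2 d u2) ->
  (forall v, v \in Gamma e2 d u2 -> [set v] \in F2) ->
  ~ rooted_nbhd_iso e1 e2 d u1 u2 ->
  ~ (forall t, view_set e1 pi1 F1 d u1 t <-> view_set e2 pi2 F2 d u2 t).
Proof.
case: d => [//|d] _ sg1 pn1 sg2 pn2 F1G F1s F2G F2s Hni Heq; apply: Hni.
have H12 : forall x, exists w, (x = u1 -> w = u2) /\
    (x \in Gamma e1 d.+1 u1 -> w \in Gamma e2 d.+1 u2 /\ Mrel e1 pi1 u1 e2 pi2 u2 d.+1 x w).
  move=> x. case: (boolP (x \in Gamma e1 d.+1 u1)) => xG; last first.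
    by exists u2.
  have [w [wG Mw]] : exists w, w \in Gamma e2 d.+1 u2 /\ Mrel e1 pi1 u1 e2 pi2 u2 d.+1 x w.
    apply: (match1 pn1 pn2 (F1 := F1) (F2 := F2) xG) => //.
      have [S SF tS] : view_set e2 pi2 F2 d.+1 u2 (tau e1 pi1 [set x] d.+1 u1).
        by apply/Heq; exists [set x] => //; apply: F1s.
      by exists S.
    move=> w wG.
    have [S SF tS] : view_set e1 pi1 F1 d.+1 u1 (tau e2 pi2 [set w] d.+1 u2).
      by apply/Heq; exists [set w] => //; apply: F2s.
    by exists S.
  exists w; split => // xu. by move: xG; rewrite xu in_setD1 eqxx.
have H21 : forall y, exists w, (y = u2 -> w = u1) /\
    (y \in Gamma e2 d.+1 u2 -> w \in Gamma e1 d.+1 u1 /\ Mrel e2 pi2 u2 e1 pi1 u1 d.+1 y w).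
  move=> y. case: (boolP (y \in Gamma e2 d.+1 u2)) => yG; last first.
    by exists u1.
  have [w [wG Mw]] : exists w, w \in Gamma e1 d.+1 u1 /\ Mrel e2 pi2 u2 e1 pi1 u1 d.+1 y w.
    apply: (match1 pn2 pn1 (F1 := F2) (F2 := F1) yG) => //.
      have [S SF tS] : view_set e1 pi1 F1 d.+1 u1 (tau e2 pi2 [set y] d.+1 u2).
        by apply/Heq; exists [set y] => //; apply: F2s.
      by exists S.
    move=> w wG.
    have [S SF tS] : view_set e2 pi2 F2 d.+1 u2 (tau e1 pi1 [set w] d.+1 u1).
      by apply/Heq; exists [set w] => //; apply: F1s.
    by exists S.
  exists w; split => // yu. by move: yG; rewrite yu in_setD1 eqxx.
have [f Hf] := fin_all_exists H12.
have [g Hg] := fin_all_exists H21.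
have f0 : f u1 = u2 by case: (Hf u1) => ->.
have g0 : g u2 = u1 by case: (Hg u2) => ->.
have Hf' : forall x, x \in Gamma e1 d.+1 u1 -> f x \in Gamma e2 d.+1 u2 /\ Mrel e1 pi1 u1 e2 pi2 u2 d.+1 x (f x).
  by move=> x; case: (Hf x).
have Hg' : forall y, y \in Gamma e2 d.+1 u2 -> g y \in Gamma e1 d.+1 u1 /\ Mrel e2 pi2 u2 e1 pi1 u1 d.+1 y (g y).
  by move=> y; case: (Hg y).
have fb : forall x, x \in ball e1 d.+1 u1 -> f x \in ball e2 d.+1 u2.
  move=> x xb; case: (x =P u1) => [->|xu]; first by rewrite f0 ball_root.
  have xG : x \in Gamma e1 d.+1 u1 by rewrite in_setD1 xb andbT; apply/eqP.
  by have [/setD1P [_ ->] _] := Hf' x xG.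
have gb : forall y, y \in ball e2 d.+1 u2 -> g y \in ball e1 d.+1 u1.
  move=> y yb; case: (y =P u2) => [->|yu]; first by rewrite g0 ball_root.
  have yG : y \in Gamma e2 d.+1 u2 by rewrite in_setD1 yb andbT; apply/eqP.
  by have [/setD1P [_ ->] _] := Hg' y yG.
have gf := inverse pn1 f0 g0 Hf' Hg'.
have fg := inverse pn2 g0 f0 Hg' Hf'.
exists f, g; do !split => //.
move=> x y xb yb; apply/idP/idP.
  move/(edge_map pn2 sg2 sg1 g0 Hg' (fb _ xb) (fb _ yb)).
  by rewrite !gf.
exact: (edge_map pn1 sg1 sg2 f0 Hf').
Qed.
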